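(* Let $A,B\in\mathbb{C}^{m\times n}$. The following are equivalent: (a) $A\le^{\diamond}B$; (b) $\mathcal{R}(B^* )=\mathcal{R}(A^* )\oplus\mathcal{R}(B^\dagger-A^\dagger)$ (direct sum); (c) $\mathcal{R}(A^* )\cap\mathcal{R}(B^\dagger-A^\dagger)=\{0\}$ and $\mathcal{R}(A^* )\subseteq\mathcal{R}(B^* )$.
   Context: For a matrix $M$, $M^*$ is its conjugate transpose, $M^\dagger$ its Moore–Penrose inverse, $\mathcal{R}(M)$ its column space. Diamond partial order: for $A,B\in\mathbb{C}^{m\times n}$, $A\le^{\diamond}B$ means $\mathcal{R}(A)\subseteq\mathcal{R}(B)$, $\mathcal{R}(A^* )\subseteq\mathcal{R}(B^* )$, and $AB^*A=AA^*A$. *)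

(* Defs.v *)
From HB Require Import structures.
From mathcomp Require Import all_boot all_order all_algebra.
From mathcomp Require Import complex.
From mathcomp Require Import reals.
Set Implicit Arguments. Unset Strict Implicit. Unset Printing Implicit Defensive.
Import Order.TTheory GRing.Theory Num.Theory.
Local Open Scope ring_scope.

Section Defs.
Variable C : numClosedFieldType.

Definition ctr m n (M : 'M[C]_(m, n)) : 'M[C]_(n, m) := (map_mx Num.conj M)^T.

(* Moore--Penrose inverse: X is the M-P inverse of M iff the four Penrose
   equations hold (X is then unique). *)
Definition is_MPinv m n (M : 'M[C]_(m, n)) (X : 'M[C]_(n, m)) : Prop :=
  [/\ M *m X *m M = M, X *m M *m X = X,
      ctr (M *m X) = M *m X & ctr (X *m M) = X *m M].

(* column space R(M) of M : 'M_(m,n), represented (as mathcomp does for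
   subspaces) by a matrix whose row space is R(M) in 'rV_m *)
Definition colspace m n (M : 'M[C]_(m, n)) : 'M[C]_(n, m) := M^T.

Definition diamond_le m n (A B : 'M[C]_(m, n)) : Prop :=
  [/\ (colspace A <= colspace B)%MS,
      (colspace (ctr A) <= colspace (ctr B))%MS &
      A *m ctr B *m A = A *m ctr A *m A].
End Defs.

(* Main.v *)
Require Import Defs.
From HB Require Import structures.
From mathcomp Require Import all_boot all_order all_algebra.
From mathcomp Require Import complex.
From mathcomp Require Import reals.
Set Implicit Arguments. Unset Strict Implicit. Unset Printing Implicit Defensive.
Import Order.TTheory GRing.Theory Num.Theory.
Local Open Scope ring_scope.

Section Core.
Variable F : fieldType.

Lemma eq0MS n k (M : 'M[F]_(k, n)) : (M == (0 : 'M_n))%MS = (M == 0).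
Proof. by rewrite /= submx0 sub0mx andbT. Qed.

Lemma cap0_mul n m k (X Z : 'M[F]_(n, m)) (W : 'M[F]_(n, k)) P Q :
  (X^T :&: Z^T <= (0 : 'M_n))%MS -> W = X *m P -> W = Z *m Q -> W = 0.
Proof.
move=> h e1 e2; apply: trmx_inj; rewrite trmx0; apply/eqP; rewrite -submx0.
apply: submx_trans h; rewrite sub_capmx; apply/andP; split.
  by rewrite e1 trmx_mul submxMl.
by rewrite e2 trmx_mul submxMl.
Qed.

Lemma core0 n m (X Z : 'M[F]_(n, m)) (G : 'M[F]_(m, n)) :
  (X + Z) *m G *m (X + Z) = X + Z -> (X^T <= ((X + Z)%R)^T)%MS ->
  ((X^T :&: Z^T <= (0 : 'M_n))%MS <-> (X *m G *m X = X /\ (X <= (X + Z)%R)%MS)).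
Proof.
set Y := X + Z => hY /submxP [K hK].
have hX : X = Y *m K^T by rewrite -[X]trmxK hK trmx_mul trmxK.
have YGX : Y *m G *m X = X by rewrite hX mulmxA hY.
have ZGXe : Z *m G *m X = X - X *m G *m X.
  by apply/eqP; rewrite eq_sym subr_eq addrC -!mulmxDl YGX.
split.
- move=> hcap.
  have W0 : X *m G *m X - X = 0.
    apply: (cap0_mul (P := G *m X - 1%:M) (Q := - (G *m X)) hcap).
      by rewrite mulmxBr (mulmx1 X) mulmxA.
    by rewrite mulmxN mulmxA ZGXe opprB.
  have XGX : X *m G *m X = X by apply/eqP; rewrite -subr_eq0 W0.
  have ZGX : Z *m G *m X = 0 by rewrite ZGXe XGX subrr.
  have XGZ : X *m G *m Z = 0.
    apply: (cap0_mul (P := G *m Z) (Q := 1%:M - G *m Z) hcap).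
      by rewrite mulmxA.
    rewrite mulmxBr (mulmx1 Z) mulmxA.
    move: hY; rewrite /Y !mulmxDl !mulmxDr XGX ZGX add0r -addrA => /addrI.
    by move=> e; apply/eqP; rewrite eq_sym subr_eq e.
  split=> //.
  apply/submxP; exists (X *m G).
  by rewrite /Y mulmxDr XGX XGZ addr0.
- case=> XGX /submxP [L hL].
  have XGY : X *m G *m Y = X by rewrite {1}hL -!mulmxA (mulmxA Y) hY -hL.
  have XGZ : X *m G *m Z = 0.
    by move: XGY; rewrite /Y mulmxDr XGX -[RHS]addr0 => /addrI.
  apply/rV_subP => v; rewrite sub_capmx => /andP [/submxP [a ->] /submxP [b hb]].
  have : X *m G *m (a *m X^T)^T = (a *m X^T)^T by rewrite trmx_mul trmxK mulmxA XGX.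
  by rewrite {1}hb trmx_mul trmxK mulmxA XGZ mul0mx => /(congr1 trmx); rewrite trmx0 trmxK => <-; rewrite sub0mx.
Qed.
End Core.
Section CT.
Variable C : numClosedFieldType.

Lemma ctrM m n p (M : 'M[C]_(m, n)) (N : 'M[C]_(n, p)) :
  ctr (M *m N) = ctr N *m ctr M.
Proof. by rewrite /ctr map_mxM trmx_mul. Qed.

Lemma ctrK m n (M : 'M[C]_(m, n)) : ctr (ctr M) = M.
Proof.
rewrite /ctr map_trmx trmxK -map_mx_comp map_mx_id //.
by move=> x /=; rewrite conjCK.
Qed.

Lemma ctr_submx m1 n1 n2 (A : 'M[C]_(m1, n1)) (B : 'M[C]_(m1, n2)) :
  (ctr A <= ctr B)%MS = (A^T <= B^T)%MS.
Proof. by rewrite /ctr !map_trmx map_submx. Qed.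

Variables (m n : nat) (A : 'M[C]_(m, n)) (Ad : 'M[C]_(n, m)).
Hypothesis hA : is_MPinv A Ad.

Lemma mp_col : (Ad^T :=: (ctr A)^T)%MS.
Proof.
case: hA => h1 h2 h3 h4.
apply/eqmxP/andP; split.
- have e : Ad = ctr A *m (ctr Ad *m Ad).
    by rewrite mulmxA -ctrM h4 h2.
  by rewrite {1}e trmx_mul submxMl.
- have e : ctr A = Ad *m (A *m ctr A).
    by rewrite mulmxA -h4 -ctrM mulmxA h1.
  by rewrite {1}e trmx_mul submxMl.
Qed.

Lemma mp_row : (Ad :=: ctr A)%MS.
Proof.
case: hA => h1 h2 h3 h4.
apply/eqmxP/andP; split.
- have e : Ad = (Ad *m ctr Ad) *m ctr A.
    by rewrite -mulmxA -ctrM h3 mulmxA h2.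
  by rewrite {1}e submxMl.
- have e : ctr A = (ctr A *m A) *m Ad.
    by rewrite -mulmxA -h3 -ctrM h1.
  by rewrite {1}e submxMl.
Qed.

Lemma mp_diamond (B : 'M[C]_(m, n)) :
  A *m ctr B *m A = A *m ctr A *m A <-> Ad *m B *m Ad = Ad.
Proof.
case: hA => h1 h2 h3 h4.
have AdActrA : Ad *m A *m ctr A = ctr A by rewrite -h4 -ctrM mulmxA h1.
have ctrAAAd : ctr A *m A *m Ad = ctr A by rewrite -mulmxA -h3 -ctrM h1.
split.
- move=> e.
  have e2 : ctr A = (Ad *m A) *m ctr B *m (A *m Ad).
    have h : Ad *m (A *m ctr B *m A) *m Ad = ctr A.
      by rewrite e !mulmxA AdActrA ctrAAAd.
    by rewrite -[LHS]h !mulmxA.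
  have e3 : A = (A *m Ad) *m B *m (Ad *m A).
    by rewrite -[LHS]ctrK e2 (ctrM (Ad *m A *m ctr B)) (ctrM (Ad *m A)) ctrK h3 h4 mulmxA.
  have h2' : Ad *m (A *m Ad) = Ad by rewrite mulmxA h2.
  by rewrite -[RHS]h2 e3 !mulmxA h2 -!mulmxA h2'.
- move=> e.
  have e3 : A = (A *m Ad) *m B *m (Ad *m A).
    by rewrite -{1}h1 -{1}e !mulmxA.
  have e2 : ctr A = (Ad *m A) *m ctr B *m (A *m Ad).
    by rewrite {1}e3 (ctrM (A *m Ad *m B)) (ctrM (A *m Ad)) h3 h4 mulmxA.
  have h1' : A *m (Ad *m A) = A by rewrite mulmxA h1.
  by rewrite e2 !mulmxA h1 -!mulmxA h1'.
Qed.
End CT.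
Unset Implicit Arguments.
Local Open Scope complex_scope.

Theorem theorem3p2 (R : realType) (m n : nat) (A B : 'M[R[i]]_(m, n))
    (Ad Bd : 'M[R[i]]_(n, m)) (hA : is_MPinv A Ad) (hB : is_MPinv B Bd) :
  let D := Bd - Ad in
  [/\ diamond_le A B <->
        ((colspace (ctr A) + colspace D == colspace (ctr B))%MS
         /\ mxdirect (colspace (ctr A) + colspace D)),
      diamond_le A B <->
        ((colspace (ctr A) :&: colspace D == (0 : 'M_n))%MS
         /\ (colspace (ctr A) <= colspace (ctr B))%MS) &
      ((colspace (ctr A) + colspace D == colspace (ctr B))%MS
         /\ mxdirect (colspace (ctr A) + colspace D)) <->
        ((colspace (ctr A) :&: colspace D == (0 : 'M_n))%MS
         /\ (colspace (ctr A) <= colspace (ctr B))%MS)].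
Proof.
move=> D; rewrite /diamond_le /colspace.
have hBB : Bd *m B *m Bd = Bd by case: hB.
have eY : Ad + D = Bd by rewrite /D addrC subrK.
have cA := mp_col hA; have cB := mp_col hB.
have cA' := eqmx_sym cA; have cB' := eqmx_sym cB.
have rA := mp_row hA; have rB := mp_row hB.
have key : ((ctr A)^T <= (ctr B)^T)%MS ->
   (((ctr A)^T :&: D^T == (0 : 'M_n))%MS <-> (Ad *m B *m Ad = Ad /\ (Ad <= Bd)%MS)).
  move=> P.
  rewrite eq0MS -submx0 (cap_eqmx cA' (eqmx_refl D^T)).
  have := core0 (X := Ad) (Z := D) (G := B); rewrite eY; apply => //.
  by rewrite cA cB.
have ac : [/\ (A^T <= B^T)%MS, ((ctr A)^T <= (ctr B)^T)%MS
            & A *m ctr B *m A = A *m ctr A *m A] <->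
          (((ctr A)^T :&: D^T == (0 : 'M_n))%MS /\ ((ctr A)^T <= (ctr B)^T)%MS).
  split.
  - case=> s1 s2 s3; split => //; apply/(key s2); split.
      exact/(mp_diamond hA).
    by rewrite rA rB ctr_submx.
  - case=> hc s2; have [e s] := (key s2).1 hc.
    split => //; first by move: s; rewrite rA rB ctr_submx.
    exact/(mp_diamond hA).
have bc : (((ctr A)^T + D^T == (ctr B)^T)%MS /\ mxdirect ((ctr A)^T + D^T)) <->
          (((ctr A)^T :&: D^T == (0 : 'M_n))%MS /\ ((ctr A)^T <= (ctr B)^T)%MS).
  split.
  - case=> /andP [s1 _] /mxdirect_addsP hcap; split.
      by rewrite hcap eq0MS.
    by apply: submx_trans s1; exact: addsmxSl.
  - case=> hc P; split; last by apply/mxdirect_addsP; apply/eqP; rewrite -eq0MS.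
    apply/andP; split.
    + rewrite addsmx_sub P /= cB' /D linearB /= addmx_sub // eqmx_opp.
      by move: P; rewrite cA' cB'.
    + by rewrite cB' (adds_eqmx cA' (eqmx_refl D^T)) -eY linearD /= addmx_sub_adds.
split.
- by rewrite ac bc.
- exact: ac.
- exact: bc.
Qed.
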